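(* Let $T$ be a finite set of students and $S$ a finite set of schools, school $s$ having capacity $q_s$. Each student $t$ submits an ordered list $\mathcal{L}_t=(s_t^1,\dots,s_t^{L_t})$ of distinct schools. For each school $s$, let $\mathcal{L}_s=\{t: s\in\mathcal{L}_t\}$ be its applicants; $s$ partitions $\mathcal{L}_s$ into acceptable and unacceptable applicants and strictly ranks the acceptable ones by a priority order $pr_s$. Let $\mu$ be the outcome of the student-proposing deferred acceptance algorithm run on these submitted lists and priorities (so each matched student $t$ has $\mu(t)\in\mathcal{L}_t$ and is acceptable to $\mu(t)$, and unacceptable applicants are never admitted). Suppose $\mu$ is non-wasteful: either $|\mu(s)|=q_s$ for every school $s$, or no student is unmatched. Then there exist a strict preference order $\succ_t$ over all of $S$ for each student $t$ and a strict priority order $\rhd_s$ over all of $T$ for each school $s$ such that (1) they are consistent with the submitted data: for each $t$, if $s,s'\in\mathcal{L}_t$ and $s$ appears before $s'$ in $\mathcal{L}_t$ then $s\succ_t s'$; for each $s$, if $t,t'$ are acceptable applicants of $s$ with $t$ ranked above $t'$ by $pr_s$ then $t\rhd_s t'$, and every acceptable applicant of $s$ is ranked by $\rhd_s$ above every unacceptable applicant of $s$; and (2) $\mu$ is stable under $(\succ,\rhd)$.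
   Context: A matching $\mu$ assigns each student $t$ either a school $\mu(t)\in S$ or leaves $t$ unmatched ($\mu(t)=t$), with $\mu(s)=\{t:\mu(t)=s\}$ and $|\mu(s)|\le q_s$. Under complete preferences, every student prefers any school to being unmatched. A matching $\mu$ is stable under $(\succ,\rhd)$ if there is no pair $(t,s)$ of a student and a school with either (i) $\mu(t)=t$ and $|\mu(s)|<q_s$, or (ii) $s\succ_t\mu(t)$ and $t\rhd_s t'$ for some $t'\in\mu(s)$. *)

(* Defs.v *)
From mathcomp Require Import all_boot.
Set Implicit Arguments. Unset Strict Implicit. Unset Printing Implicit Defensive.

(* Data conventions:
   - L t : seq S   = submitted ordered list of student t (first = most preferred);
   - P s : seq T   = the acceptable applicants of school s, listed in decreasing
                     priority pr_s (first = highest priority).  The applicants of s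
                     are [set t | s \in L t]; those not in P s are unacceptable.
   - q s : nat     = capacity of school s.
   - a matching is mu : T -> option S (None = unmatched). *)

Section DA.
Variables (T S : finType) (q : S -> nat) (L : T -> seq S) (P : S -> seq T).

(* ptr t = number of schools of L t that have rejected t so far;
   t currently applies to the (ptr t)-th school of L t, if any. *)
Definition applying (ptr : T -> nat) (s : S) (t : T) : bool :=
  onth (L t) (ptr t) == Some s.

Definition held (ptr : T -> nat) (s : S) (t : T) : bool :=
  [&& applying ptr s t, t \in P s &
      #|[set t' | [&& applying ptr s t', t' \in P s &
                      index t' (P s) < index t (P s)]]| < q s].

Definition da_step (ptr : T -> nat) : T -> nat :=
  fun t => if (ptr t < size (L t)) && [forall s, ~~ held ptr s t]
           then (ptr t).+1 else ptr t.

(* enough rounds for the procedure to terminate (each non-final round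
   increases \sum_t ptr t, which is bounded by \sum_t size (L t)) *)
Definition da_ptr : T -> nat :=
  iter (\sum_t size (L t)).+1 da_step (fun _ => 0).

Definition DA (t : T) : option S := [pick s | held da_ptr s t].

End DA.

Definition strict_total_order (X : finType) (r : rel X) : Prop :=
  [/\ irreflexive r, transitive r & forall x y, x != y -> r x y || r y x].

Definition prefers_to (S : finType) (r : rel S) (s : S) (o : option S) : bool :=
  if o is Some s' then r s s' else true.

Definition assigned (T S : finType) (mu : T -> option S) (s : S) : {set T} :=
  [set t | mu t == Some s].

Definition stable (T S : finType) (q : S -> nat)
    (pref : T -> rel S) (prio : S -> rel T) (mu : T -> option S) : Prop :=
  forall (t : T) (s : S),
    ~ (mu t = None /\ #|assigned mu s| < q s) /\
    ~ (prefers_to (pref t) s (mu t) /\ exists2 t', t' \in assigned mu s & prio s t t').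

Definition non_wasteful (T S : finType) (q : S -> nat) (mu : T -> option S) : Prop :=
  (forall s, #|assigned mu s| = q s) \/ (forall t, mu t <> None).

(* Main.v *)
From Stdlib Require Import FunctionalExtensionality.
Require Import Defs.
From mathcomp Require Import all_boot.
From mathcomp Require Import zify.
Set Implicit Arguments. Unset Strict Implicit. Unset Printing Implicit Defensive.

Lemma onth_some (X : eqType) (s : seq X) n x :
  onth s n == Some x -> (n < size s) /\ nth x s n = x.
Proof.
move=> /eqP e; split; first by rewrite -onthTE e.
exact: onth_nth e.
Qed.

Lemma onth_mk (X : eqType) (s : seq X) n x :
  n < size s -> nth x s n = x -> onth s n = Some x.
Proof. by move=> h <-; rewrite onthE (nth_map x) // . Qed.

Lemma count_top (X : finType) (A : {set X}) (key : X -> nat) n :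
  {in A &, injective key} -> n <= #|A| ->
  n <= #|[set x in A | #|[set y in A | key y < key x]| < n]|.
Proof.
move=> inj hn.
pose cnt x := #|[set y in A | key y < key x]|.
have cnt_lt x : x \in A -> cnt x < #|A|.
  move=> xA; apply: proper_card; apply/properP; split.
    by apply/subsetP=> y; rewrite inE => /andP[].
  by exists x => //; rewrite inE ltnn andbF.
have key_mono a b : a \in A -> b \in A -> key a < key b -> cnt a < cnt b.
  move=> aA bA lab; apply: proper_card; apply/properP; split.
    apply/subsetP=> z; rewrite !inE => /andP[-> h] /=; exact: ltn_trans h lab.
  by exists a; rewrite !inE ?aA ?lab // ltnn andbF.
have cnt_inj : {in A &, injective cnt}.
  move=> x y xA yA e; apply: inj => //.
  case: (ltngtP (key x) (key y)) => // h.
    by have := key_mono _ _ xA yA h; rewrite e ltnn.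
  by have := key_mono _ _ yA xA h; rewrite e ltnn.
set C := [set x in A | _].
have CA : C \subset A by apply/subsetP=> x; rewrite inE => /andP[].
have hD : #|A :\: C| <= #|A| - n.
  have <- : size (map cnt (enum (A :\: C))) = #|A :\: C| by rewrite size_map cardE.
  rewrite -(size_iota n (#|A| - n)).
  apply: uniq_leq_size.
    rewrite map_inj_in_uniq ?enum_uniq //.
    move=> x y; rewrite !mem_enum !inE => /andP[_ xA] /andP[_ yA]; exact: cnt_inj.
  move=> i /mapP[x]; rewrite mem_enum !inE => /andP[xC xA] ->.
  rewrite xA /= -leqNgt in xC.
  have := cnt_lt x xA; rewrite mem_iota; rewrite /cnt in xC *; lia.
have := cardsID C A; rewrite (setIidPr CA); lia.
Qed.

Definition lexr (X : finType) (key : X -> nat) : rel X :=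
  fun x y => (key x < key y) || ((key x == key y) && (enum_rank x < enum_rank y)).

Lemma lexr_sto (X : finType) (key : X -> nat) : strict_total_order (lexr key).
Proof.
split.
- by move=> x; rewrite /lexr ltnn eqxx ltnn.
- move=> y x z; rewrite /lexr => /orP[h1|/andP[/eqP h1 h2]] /orP[h3|/andP[/eqP h3 h4]];
  apply/orP; by [left; lia | right; apply/andP; split; [apply/eqP|]; lia].
- move=> x y nxy; rewrite /lexr.
  case: (ltngtP (key x) (key y)) => h //=.
  case: (ltngtP (enum_rank x) (enum_rank y)) => //.
  by move=> /ord_inj/enum_rank_inj e; rewrite e eqxx in nxy.
Qed.

Lemma lexr_lt (X : finType) (key : X -> nat) x y : key x < key y -> lexr key x y.
Proof. by rewrite /lexr => ->. Qed.

Lemma lexr_le (X : finType) (key : X -> nat) x y : lexr key x y -> key x <= key y.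
Proof. by rewrite /lexr => /orP[/ltnW|/andP[/eqP -> _]]. Qed.

Section Proof.
Variables (T S : finType) (q : S -> nat) (L : T -> seq S) (P : S -> seq T).

Definition better ptr s t := [set t' | [&& applying L ptr s t', t' \in P s &
                                         index t' (P s) < index t (P s)]].

Lemma step_ge ptr t : ptr t <= da_step q L P ptr t.
Proof. by rewrite /da_step; case: ifP. Qed.

Lemma step_R ptr s t : t \in P s -> q s <= #|better ptr s t| ->
  q s <= #|better (da_step q L P ptr) s t|.
Proof.
move=> tP hR.
have inj : {in better ptr s t &, injective (fun x => index x (P s))}.
  move=> x y; rewrite !inE => /and3P[_ xP _] /and3P[_ yP _] e.
  by rewrite -[x](nth_index x xP) e nth_index.
have := count_top inj hR => h; apply: leq_trans h _; apply: subset_leq_card.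
apply/subsetP=> x; rewrite !inE => /andP[/and3P[xa xP xt] hc].
have hx : held q L P ptr s x.
  rewrite /held xa xP /=; apply: leq_ltn_trans hc; apply: subset_leq_card.
  apply/subsetP=> y; rewrite !inE => /and3P[ya yP yx].
  by rewrite ya yP yx (ltn_trans yx xt).
have e : da_step q L P ptr x = ptr x.
  rewrite /da_step; have -> : [forall s, ~~ held q L P ptr s x] = false.
    by apply/negbTE/forallPn; exists s; rewrite negbK.
  by rewrite andbF.
by move: xa; rewrite /applying e => ->; rewrite xP xt.
Qed.

Local Notation ptrk k := (iter k (da_step q L P) (fun _ => 0)).

Lemma ptr_bound k t : ptrk k t <= size (L t).
Proof.
elim: k => //= k IH; rewrite /da_step; case: ifP => // /andP[]//.
Qed.

Lemma rej_R k s t : t \in P s -> s \in L t -> index s (L t) < ptrk k t ->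
  q s <= #|better (ptrk k) s t|.
Proof.
move=> tP sL; elim: k => // k IH /=.
case: (ltnP (index s (L t)) (ptrk k t)) => h.
  by move=> _; apply: step_R => //; apply: IH.
rewrite {1}/da_step; case: ifP => [/andP[hsz /forallP hall] | _] h'; last first.
  by move: h h'; rewrite leqNgt => /negP.
have ei : index s (L t) = ptrk k t by apply/eqP; rewrite eqn_leq h -ltnS h'.
apply: step_R => //.
have := hall s; rewrite /held.
have -> : applying L (ptrk k) s t.
  by rewrite /applying (onth_mk (x := s) hsz) // -ei nth_index.
by rewrite tP /= -leqNgt.
Qed.

Lemma fixk k : da_step q L P (ptrk k) = ptrk k \/ k <= \sum_t ptrk k t.
Proof.
elim: k => [|k [e|IH]]; first by right.
  by left; rewrite /= e e.
case: (boolP [forall t, da_step q L P (ptrk k) t == ptrk k t]).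
  move/forallP=> h; left.
  have e : da_step q L P (ptrk k) = ptrk k.
    by apply: functional_extensionality => t; apply/eqP.
  by rewrite /= e e.
move/forallPn=> [t0 ht0]; right.
apply: leq_ltn_trans IH _ => /=.
rewrite (bigD1 t0) //= [X in _ < X](bigD1 t0) //= -addSn.
apply: leq_add.
  by rewrite ltn_neqAle eq_sym ht0 step_ge.
by apply: leq_sum => i _; apply: step_ge.
Qed.

Lemma da_fix : da_step q L P (da_ptr q L P) = da_ptr q L P.
Proof.
rewrite /da_ptr; case: (fixk (\sum_t size (L t)).+1) => // h.
have : \sum_t ptrk (\sum_t size (L t)).+1 t <= \sum_t size (L t).
  by apply: leq_sum => i _; apply: ptr_bound.
lia.
Qed.

Lemma unmatched t : DA q L P t = None -> size (L t) <= da_ptr q L P t.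
Proof.
rewrite /DA; case: pickP => // hn _.
rewrite leqNgt; apply/negP => hlt.
have := congr1 (fun f => f t) da_fix; rewrite /= /da_step hlt /=.
have -> : [forall s, ~~ held q L P (da_ptr q L P) s t].
  by apply/forallP => s; rewrite hn.
by move/esym/n_Sn.
Qed.

Lemma core s t t' : t \in P s -> s \in L t -> index s (L t) < da_ptr q L P t ->
  held q L P (da_ptr q L P) s t' -> index t' (P s) < index t (P s).
Proof.
move=> tP sL hlt.
have hR := rej_R tP sL hlt.
move/and3P=> [ha hP hc]; rewrite ltnNge; apply/negP => hle.
have : #|better (da_ptr q L P) s t| <=
   #|[set t'0 | [&& applying L (da_ptr q L P) s t'0, t'0 \in P s
           & index t'0 (P s) < index t' (P s)]]|.
  apply: subset_leq_card; apply/subsetP => y; rewrite !inE => /and3P[-> -> h] /=.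
  exact: leq_trans h hle.
move: hR hc; rewrite /da_ptr; lia.
Qed.

Lemma DA_held t s : DA q L P t = Some s -> held q L P (da_ptr q L P) s t.
Proof. by rewrite /DA; case: pickP => // s0 h [<-]. Qed.

End Proof.

Theorem mainTheorem2 (T S : finType) (q : S -> nat) (L : T -> seq S) (P : S -> seq T)
  (HLuniq : forall t, uniq (L t))
  (HPuniq : forall s, uniq (P s))
  (HPapp : forall s t, t \in P s -> s \in L t) :
  non_wasteful q (DA q L P) ->
  exists (pref : T -> rel S) (prio : S -> rel T),
    [/\ (forall t, strict_total_order (pref t)) /\
          (forall s, strict_total_order (prio s)),
        forall t s s', s \in L t -> s' \in L t ->
          index s (L t) < index s' (L t) -> pref t s s',
        forall s t t', t \in P s -> t' \in P s ->
          index t (P s) < index t' (P s) -> prio s t t',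
        forall s t t', t \in P s -> s \in L t' -> t' \notin P s -> prio s t t'
      & stable q pref prio (DA q L P)].
Proof.
move=> hnw.
exists (fun t => lexr (fun s => index s (L t))), (fun s => lexr (fun t => index t (P s))).
split.
- by split=> ?; apply: lexr_sto.
- by move=> t s s' _ _ h; apply: lexr_lt.
- by move=> s t t' _ _ h; apply: lexr_lt.
- by move=> s t t' tP _ t'P; apply: lexr_lt; rewrite (memNindex t'P) index_mem.
move=> t s; split.
  case=> hnone hlt; case: hnw => [hf|hm]; first by rewrite hf ltnn in hlt.
  exact: hm t hnone.
case=> hpref [t' t'a hprio].
have t'h : held q L P (da_ptr q L P) s t'.
  by rewrite inE in t'a; apply: DA_held; apply/eqP.
have t'P : t' \in P s by case/and3P: t'h.
suff : index t' (P s) < index t (P s) by have := lexr_le hprio; lia.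
case: (boolP (t \in P s)) => tP; last by rewrite (memNindex tP) index_mem.
apply: (core tP (HPapp _ _ tP) _ t'h).
case e: (DA q L P t) hpref => [s'|] /= hpref; last first.
  have := unmatched e; have := HPapp _ _ tP; rewrite -index_mem => a b; exact: leq_trans a b.
have := DA_held e => /and3P[ha _ _].
have [hsz hn] := onth_some ha.
have ei : index s' (L t) = da_ptr q L P t.
  by rewrite -{1}hn index_uniq.
have hle := lexr_le hpref; rewrite ei in hle.
rewrite ltn_neqAle hle andbT; apply/negP => /eqP hs.
have sL : s \in L t by rewrite -index_mem hs.
have ss : s = s' by rewrite -(nth_index s sL) hs -hn; apply: set_nth_default.
by rewrite ss /lexr ltnn eqxx ltnn in hpref.
Qed.
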